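(* For every complete lattice $(\mathcal{L},\leq)$, the category $\mathbf{Graph}_{(\mathcal{L},\leq)}$ is strongly amendable.
   Context: A graph labeled from $\mathcal{L}$ consists of sets $V$, $E$, source and target functions $s,t : E \to V$, and label functions $\ell^V : V \to \mathcal{L}$, $\ell^E : E \to \mathcal{L}$. A premorphism $\phi : G \to G'$ is a pair $(\phi_V : V_G \to V_{G'}, \phi_E : E_G \to E_{G'})$ with $s_{G'} \circ \phi_E = \phi_V \circ s_G$ and $t_{G'} \circ \phi_E = \phi_V \circ t_G$. For a complete lattice $(\mathcal{L},\leq)$, $\mathbf{Graph}_{(\mathcal{L},\leq)}$ has graphs labeled from $\mathcal{L}$ as objects and as morphisms the premorphisms $\phi$ with $\ell_G(x) \leq \ell_{G'}(\phi(x))$ for all $x \in V_G \cup E_G$. A category is amendable if for every morphism $t_L : L \to L'$ there is a factorization $t_L = \beta \circ t_L'$ with $t_L' : L \rightarrowtail L''$ mono such that for every factorization $t_L = \alpha \circ m$ with $m : L \rightarrowtail G_L$ mono there exists $\alpha' : G_L \to L''$ with $\alpha' \circ m = t_L'$ and $\beta \circ \alpha' = \alpha$; it is strongly amendable if the factorization $(t_L',\beta)$ can be chosen so that moreover, in each case, $L \xleftarrow{1_L} L \xrightarrow{m} G_L$ is a pullback of $t_L'$ and $\alpha'$. *)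

(* Defs.v *)
Set Implicit Arguments.
Unset Strict Implicit.

Record complete_lattice := CompleteLattice {
  lcar :> Type;
  lle : lcar -> lcar -> Prop;
  lle_refl : forall x, lle x x;
  lle_trans : forall x y z, lle x y -> lle y z -> lle x z;
  lle_antisym : forall x y, lle x y -> lle y x -> x = y;
  lcomplete : forall S : lcar -> Prop, exists s : lcar,
      (forall x, S x -> lle x s) /\
      (forall u, (forall x, S x -> lle x u) -> lle s u)
}.

#[local] Unset Implicit Arguments.
Record graph (L : Type) := Graph {
  gV : Type;
  gE : Type;
  gsrc : gE -> gV;
  gtgt : gE -> gV;
  glabV : gV -> L;
  glabE : gE -> L
}.
Arguments gV {L} g.
Arguments gE {L} g.
Arguments gsrc {L} g _.
Arguments gtgt {L} g _.
Arguments glabV {L} g _.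
Arguments glabE {L} g _.
#[local] Set Implicit Arguments.

Section Cat.
Variable CL : complete_lattice.
Local Notation L := (lcar CL).
Local Notation "x <= y" := (lle x y).

Record hom (G H : graph L) := Hom {
  homV : gV G -> gV H;
  homE : gE G -> gE H;
  hom_src : forall e, gsrc H (homE e) = homV (gsrc G e);
  hom_tgt : forall e, gtgt H (homE e) = homV (gtgt G e);
  hom_labV : forall v, glabV G v <= glabV H (homV v);
  hom_labE : forall e, glabE G e <= glabE H (homE e)
}.

Definition hom_eq (G H : graph L) (f g : hom G H) : Prop :=
  (forall v, homV f v = homV g v) /\ (forall e, homE f e = homE g e).

Definition hom_id (G : graph L) : hom G G.
Proof.
  refine (@Hom G G (fun v => v) (fun e => e) _ _ _ _);
    intros; solve [reflexivity | apply lle_refl].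
Defined.

Definition hom_comp (G H K : graph L) (g : hom H K) (f : hom G H) : hom G K.
Proof.
  refine (@Hom G K (fun v => homV g (homV f v)) (fun e => homE g (homE f e))
            _ _ _ _); intros.
  - rewrite hom_src, hom_src; reflexivity.
  - rewrite hom_tgt, hom_tgt; reflexivity.
  - eapply lle_trans; [apply hom_labV | apply hom_labV].
  - eapply lle_trans; [apply hom_labE | apply hom_labE].
Defined.

Definition mono (G H : graph L) (m : hom G H) : Prop :=
  forall (X : graph L) (f g : hom X G),
    hom_eq (hom_comp m f) (hom_comp m g) -> hom_eq f g.

Definition is_pullback (P A B C : graph L)
    (p : hom P A) (q : hom P B) (f : hom A C) (g : hom B C) : Prop :=
  hom_eq (hom_comp f p) (hom_comp g q) /\
  forall (X : graph L) (x : hom X A) (y : hom X B),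
    hom_eq (hom_comp f x) (hom_comp g y) ->
    exists u : hom X P,
      hom_eq (hom_comp p u) x /\ hom_eq (hom_comp q u) y /\
      forall u' : hom X P,
        hom_eq (hom_comp p u') x -> hom_eq (hom_comp q u') y -> hom_eq u' u.

Definition strongly_amendable : Prop :=
  forall (Lg L' : graph L) (tL : hom Lg L'),
    exists (L'' : graph L) (tL' : hom Lg L'') (beta : hom L'' L'),
      mono tL' /\ hom_eq tL (hom_comp beta tL') /\
      forall (GL : graph L) (m : hom Lg GL) (alpha : hom GL L'),
        mono m -> hom_eq tL (hom_comp alpha m) ->
        exists alpha' : hom GL L'',
          hom_eq (hom_comp alpha' m) tL' /\
          hom_eq (hom_comp beta alpha') alpha /\
          is_pullback (hom_id Lg) m tL' alpha'.

End Cat.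

(* Main.v *)
Require Import Defs.
From Stdlib Require Import ClassicalEpsilon.
Set Implicit Arguments.

Section S.
Variable CL : complete_lattice.

Lemma bot_ex : exists b : lcar CL, forall u, lle b u.
Proof.
  destruct (@lcomplete CL (fun _ => False)) as [s [_ H]].
  exists s. intros u; apply H; intros x [].
Qed.

Lemma mono_injV (G H : graph CL) (m : hom G H) : mono m ->
  forall a b, homV m a = homV m b -> a = b.
Proof.
  intros Hm a b E. destruct bot_ex as [bo Hb].
  set (X := @Graph CL unit Empty_set (fun e => match e with end)
              (fun e => match e with end) (fun _ => bo) (fun _ => bo)).
  assert (f : hom X G).
  { refine (@Hom CL X G (fun _ => a) (fun e => match e with end) _ _ _ _);
      intros []; apply Hb. }
  refine (proj1 (Hm X
    (@Hom CL X G (fun _ => a) (fun e => match e with end)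
       (fun e => match e with end) (fun e => match e with end)
       (fun _ => Hb _) (fun e => match e with end))
    (@Hom CL X G (fun _ => b) (fun e => match e with end)
       (fun e => match e with end) (fun e => match e with end)
       (fun _ => Hb _) (fun e => match e with end)) _) tt).
  split; simpl.
  - intros _; exact E.
  - intros [].
Qed.

Lemma mono_injE (G H : graph CL) (m : hom G H) : mono m ->
  forall a b, homE m a = homE m b -> a = b.
Proof.
  intros Hm a b E. destruct bot_ex as [bo Hb].
  assert (Es : gsrc G a = gsrc G b).
  { apply (mono_injV Hm). rewrite <- !hom_src, E; reflexivity. }
  assert (Et : gtgt G a = gtgt G b).
  { apply (mono_injV Hm). rewrite <- !hom_tgt, E; reflexivity. }
  set (X := @Graph CL (gV G) unit (fun _ => gsrc G a) (fun _ => gtgt G a)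
              (fun _ => bo) (fun _ => bo)).
  refine (proj2 (Hm X
    (@Hom CL X G (fun v => v) (fun _ => a)
       (fun _ => eq_refl) (fun _ => eq_refl)
       (fun _ => Hb _) (fun _ => Hb _))
    (@Hom CL X G (fun v => v) (fun _ => b)
       (fun _ => eq_sym Es) (fun _ => eq_sym Et)
       (fun _ => Hb _) (fun _ => Hb _)) _) tt).
  split; simpl.
  - intros v; reflexivity.
  - intros _; exact E.
Qed.

Variables (Lg L' : graph CL) (tL : hom Lg L').

Definition V2 := (gV Lg + gV L')%type.
Definition bV (x : V2) : gV L' := match x with inl a => homV tL a | inr v => v end.
Definition E2 := (gE Lg + {p : gE L' * (V2 * V2) |
   bV (fst (snd p)) = gsrc L' (fst p) /\ bV (snd (snd p)) = gtgt L' (fst p)})%type.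
Definition src2 (x : E2) : V2 :=
  match x with inl e => inl (gsrc Lg e) | inr p => fst (snd (proj1_sig p)) end.
Definition tgt2 (x : E2) : V2 :=
  match x with inl e => inl (gtgt Lg e) | inr p => snd (snd (proj1_sig p)) end.
Definition labV2 (x : V2) : lcar CL :=
  match x with inl a => glabV L' (homV tL a) | inr v => glabV L' v end.
Lemma labV2_bV x : labV2 x = glabV L' (bV x).
Proof. destruct x; reflexivity. Qed.
Definition bE (x : E2) : gE L' :=
  match x with inl e => homE tL e | inr p => fst (proj1_sig p) end.
Definition labE2 (x : E2) : lcar CL := glabE L' (bE x).
Definition G2 : graph CL := @Graph CL V2 E2 src2 tgt2 labV2 labE2.

Definition beta : hom G2 L'.
Proof.
  refine (@Hom CL G2 L' bV bE _ _ _ _).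
  - intros [e|[p [H1 H2]]]; simpl. apply hom_src. symmetry; exact H1.
  - intros [e|[p [H1 H2]]]; simpl. apply hom_tgt. symmetry; exact H2.
  - intros [a|v]; apply lle_refl.
  - intros x; apply lle_refl.
Defined.

Definition tL2 : hom Lg G2.
Proof.
  refine (@Hom CL Lg G2 inl inl _ _ _ _); intros; try reflexivity.
  apply hom_labV. apply hom_labE.
Defined.

Section Alpha.
Variables (GL : graph CL) (m : hom Lg GL) (alpha : hom GL L').
Hypothesis Hm : mono m.
Hypothesis Ht : hom_eq tL (hom_comp alpha m).

Definition aV (v : gV GL) : V2 :=
  match excluded_middle_informative (exists a, homV m a = v) with
  | left H => inl (proj1_sig (constructive_indefinite_description _ H))
  | right _ => inr (homV alpha v)
  end.

Lemma aV_m a : aV (homV m a) = inl a.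
Proof.
  unfold aV. destruct excluded_middle_informative as [H|H].
  - destruct constructive_indefinite_description as [b Hb]; simpl.
    f_equal; apply (mono_injV Hm); exact Hb.
  - exfalso; apply H; eauto.
Qed.

Lemma bV_aV v : bV (aV v) = homV alpha v.
Proof.
  unfold aV. destruct excluded_middle_informative as [H|H].
  - destruct constructive_indefinite_description as [b Hb]; simpl.
    subst v. apply (proj1 Ht).
  - reflexivity.
Qed.

Lemma aV_inl v a : aV v = inl a -> homV m a = v.
Proof.
  unfold aV. destruct excluded_middle_informative as [H|H].
  - destruct constructive_indefinite_description as [b Hb]; simpl.
    intros E; injection E; intros; subst; reflexivity.
  - discriminate.
Qed.

Lemma aE_pf (e : gE GL) :
  bV (fst (snd (homE alpha e, (aV (gsrc GL e), aV (gtgt GL e))))) =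
     gsrc L' (fst (homE alpha e, (aV (gsrc GL e), aV (gtgt GL e)))) /\
  bV (snd (snd (homE alpha e, (aV (gsrc GL e), aV (gtgt GL e))))) =
     gtgt L' (fst (homE alpha e, (aV (gsrc GL e), aV (gtgt GL e)))).
Proof.
  simpl. rewrite !bV_aV, hom_src, hom_tgt; split; reflexivity.
Qed.

Definition aE (e : gE GL) : E2 :=
  match excluded_middle_informative (exists a, homE m a = e) with
  | left H => inl (proj1_sig (constructive_indefinite_description _ H))
  | right _ => inr (exist _ _ (aE_pf e))
  end.

Lemma aE_m a : aE (homE m a) = inl a.
Proof.
  unfold aE. destruct excluded_middle_informative as [H|H].
  - destruct constructive_indefinite_description as [b Hb]; simpl.
    f_equal; apply (mono_injE Hm); exact Hb.
  - exfalso; apply H; eauto.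
Qed.

Lemma bE_aE e : bE (aE e) = homE alpha e.
Proof.
  unfold aE. destruct excluded_middle_informative as [H|H].
  - destruct constructive_indefinite_description as [b Hb]; simpl.
    subst e. apply (proj2 Ht).
  - reflexivity.
Qed.

Lemma aE_inl e a : aE e = inl a -> homE m a = e.
Proof.
  unfold aE. destruct excluded_middle_informative as [H|H].
  - destruct constructive_indefinite_description as [b Hb]; simpl.
    intros E; injection E; intros; subst; reflexivity.
  - discriminate.
Qed.

Definition alpha2 : hom GL G2.
Proof.
  refine (@Hom CL GL G2 aV aE _ _ _ _).
  - intros e. unfold aE. destruct excluded_middle_informative as [H|H].
    + destruct constructive_indefinite_description as [b Hb]; simpl.
      subst e. rewrite hom_src, aV_m. reflexivity.
    + reflexivity.
  - intros e. unfold aE. destruct excluded_middle_informative as [H|H].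
    + destruct constructive_indefinite_description as [b Hb]; simpl.
      subst e. rewrite hom_tgt, aV_m. reflexivity.
    + reflexivity.
  - intros v. simpl. rewrite labV2_bV, bV_aV. apply hom_labV.
  - intros e. change (lle (glabE GL e) (glabE L' (bE (aE e)))).
    rewrite bE_aE. apply hom_labE.
Defined.
End Alpha.
End S.

Theorem lemma6 : forall CL : complete_lattice, strongly_amendable CL.
Proof.
  intros CL Lg L' tL.
  exists (G2 tL), (tL2 tL), (beta tL). split; [|split].
  - intros X f g [H1 H2]; split.
    + intros v; specialize (H1 v); simpl in H1; injection H1; auto.
    + intros e; specialize (H2 e); simpl in H2; injection H2; auto.
  - split; intros; reflexivity.
  - intros GL m alpha Hm Ht.
    exists (alpha2 Hm Ht). split; [|split].
    + split; intros; simpl. eapply aV_m; eauto. eapply aE_m; eauto.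
    + split; intros; simpl. eapply bV_aV; eauto. eapply bE_aE; eauto.
    + split.
      * split; intros; simpl. symmetry; eapply aV_m; eauto. symmetry; eapply aE_m; eauto.
      * intros X x y [H1 H2]. exists x. split; [|split].
        -- split; intros; reflexivity.
        -- split; intros; simpl.
           ++ apply (aV_inl m alpha). symmetry. apply (H1 v).
           ++ apply (aE_inl Ht). symmetry. apply (H2 e).
        -- intros u' [U1 U2] _. split; intros; [apply (U1 v)|apply (U2 e)].
Qed.
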